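(* Let $G$ be a graph without isolated vertices. There exists a GDDS $S$ of $G$ such that $|\widehat{S^1}|\ge|\widehat{S^2}|$; in particular $|\widehat{S^1}|\ge\gamma_{gr}^{\times2}(G)/2$.
   Context: Graphs are finite, simple, undirected; $N[v]$ closed neighborhood. A sequence $S=(v_1,\dots,v_k)$ of distinct vertices is a double neighborhood sequence if for each $i$ some $w\in N[v_i]$ satisfies $|\{j<i:w\in N[v_j]\}|\le1$; a double dominating sequence (DDS) if moreover its vertex set $D$ satisfies $|N[w]\cap D|\ge2$ for all $w$; a GDDS is a DDS of maximum length, and this length is $\gamma_{gr}^{\times2}(G)$. $\widehat S$ is the vertex set of $S$. $S^1$ is the subsequence of $S$ consisting of those $v_i$ with $N[v_i]\setminus\bigcup_{j<i}N[v_j]\neq\emptyset$, and $S^2$ is the subsequence of the remaining vertices. *)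

(* Defs.v *)
From mathcomp Require Import all_boot all_order.
Set Implicit Arguments. Unset Strict Implicit. Unset Printing Implicit Defensive.

Section DDS.
Variables (T : finType) (e : rel T).

Definition simple_graph : Prop := symmetric e /\ irreflexive e.
Definition no_isolated : Prop := forall v : T, exists u : T, e v u.

Definition cnbh (v : T) : {set T} := [set w | (w == v) || e v w].

Definition sv (s : seq T) (i : 'I_(size s)) : T := tnth (in_tuple s) i.

Definition cover_count (s : seq T) (i : nat) (w : T) : nat :=
  count (fun u => w \in cnbh u) (take i s).

Definition is_dns (s : seq T) : bool :=
  uniq s &&
  [forall i : 'I_(size s), [exists w in cnbh (sv i), cover_count s i w <= 1]].

Definition is_dds (s : seq T) : bool :=
  is_dns s && [forall w : T, 2 <= #|cnbh w :&: [set x in s]|].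

Definition is_gdds (s : seq T) : Prop :=
  is_dds s /\ forall t : seq T, is_dds t -> size t <= size s.

Definition gamma_gr2 : nat :=
  \max_(n < #|T|.+1 | [exists t : n.-tuple T, is_dds t]) n.

Definition is_new (s : seq T) (i : 'I_(size s)) : bool :=
  cnbh (sv i) :\: \bigcup_(u <- take i s) cnbh u != set0.

Definition S1 (s : seq T) : seq T := [seq sv i | i <- enum 'I_(size s) & is_new i].
Definition S2 (s : seq T) : seq T := [seq sv i | i <- enum 'I_(size s) & ~~ is_new i].

End DDS.

(* Main.v *)
Require Import Defs.
From mathcomp Require Import all_boot all_order.
From mathcomp Require Import zify.
Set Implicit Arguments. Unset Strict Implicit. Unset Printing Implicit Defensive.

Definition okb (T : finType) (e : rel T) (p : seq T) (v : T) : bool :=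
  [exists w in cnbh e v, count (fun u => w \in cnbh e u) p <= 1].
Definition newb (T : finType) (e : rel T) (p : seq T) (v : T) : bool :=
  cnbh e v :\: \bigcup_(u <- p) cnbh e u != set0.

Lemma svE (T : finType) (x0 : T) (s : seq T) (i : 'I_(size s)) : sv i = nth x0 s i.
Proof. by rewrite /sv (tnth_nth x0). Qed.

Lemma dns_nat (T : finType) (e : rel T) (x0 : T) (s : seq T) :
  is_dns e s = uniq s && all (fun i => okb e (take i s) (nth x0 s i)) (iota 0 (size s)).
Proof.
rewrite /is_dns; congr andb; apply/forallP/allP.
- move=> H i; rewrite mem_iota => /andP[_ Hi]; have := H (Ordinal Hi).
  by rewrite (svE x0).
- move=> H i; have := H i; rewrite mem_iota ltn_ord (svE x0) => /(_ isT).
  by [].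
Qed.

Lemma dns_rcons (T : finType) (e : rel T) (s : seq T) (v : T) :
  is_dns e (rcons s v) = [&& is_dns e s, v \notin s & okb e s v].
Proof.
rewrite !(dns_nat e v) size_rcons -addn1 iotaD all_cat /= add0n rcons_uniq.
have -> : all (fun i => okb e (take i (rcons s v)) (nth v (rcons s v) i)) (iota 0 (size s))
        = all (fun i => okb e (take i s) (nth v s i)) (iota 0 (size s)).
  apply: eq_in_all => i; rewrite mem_iota => /andP[_ Hi].
  by rewrite nth_rcons Hi -cats1 takel_cat // ltnW.
rewrite nth_rcons ltnn eqxx -cats1 takel_cat // take_size andbT.
by case: (v \in s); case: (uniq s); case: all.
Qed.

Lemma S1_nat (T : finType) (e : rel T) (x0 : T) (s : seq T) :
  S1 e s = [seq nth x0 s i | i <- iota 0 (size s) & newb e (take i s) (nth x0 s i)].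
Proof.
rewrite /S1 -val_enum_ord filter_map -map_comp.
have -> : [seq i <- enum 'I_(size s) | is_new e i] =
          [seq i <- enum 'I_(size s) | preim val (fun i => newb e (take i s) (nth x0 s i)) i].
  by apply: eq_filter => i; rewrite /is_new /newb (svE x0).
by apply: eq_map => i /=; rewrite (svE x0).
Qed.

Lemma S2_nat (T : finType) (e : rel T) (x0 : T) (s : seq T) :
  S2 e s = [seq nth x0 s i | i <- iota 0 (size s) & ~~ newb e (take i s) (nth x0 s i)].
Proof.
rewrite /S2 -val_enum_ord filter_map -map_comp.
have -> : [seq i <- enum 'I_(size s) | ~~ is_new e i] =
          [seq i <- enum 'I_(size s) | preim val (fun i => ~~ newb e (take i s) (nth x0 s i)) i].
  by apply: eq_filter => i; rewrite /is_new /newb (svE x0).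
by apply: eq_map => i /=; rewrite (svE x0).
Qed.

Lemma S1_rcons (T : finType) (e : rel T) (s : seq T) (v : T) :
  S1 e (rcons s v) = if newb e s v then rcons (S1 e s) v else S1 e s.
Proof.
rewrite !(S1_nat e v) size_rcons -addn1 iotaD filter_cat map_cat /= add0n.
rewrite nth_rcons ltnn eqxx -[rcons s v]cats1 takel_cat // take_size.
have -> : [seq nth v (s ++ [:: v]) i | i <- iota 0 (size s)
            & newb e (take i (s ++ [:: v])) (nth v (s ++ [:: v]) i)]
        = [seq nth v s i | i <- iota 0 (size s) & newb e (take i s) (nth v s i)].
  rewrite (@eq_in_filter _ _ (fun i => newb e (take i s) (nth v s i))); last first.
    move=> i; rewrite mem_iota => /andP[_ Hi].
    by rewrite cats1 nth_rcons Hi -cats1 takel_cat // ltnW.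
  apply/eq_in_map => i; rewrite mem_filter mem_iota => /andP[_ /andP[_ Hi]].
  by rewrite cats1 nth_rcons Hi.
by case: newb => /=; rewrite ?nth_cat ?ltnn ?subnn /= ?cats1 ?cats0.
Qed.

Lemma S2_rcons (T : finType) (e : rel T) (s : seq T) (v : T) :
  S2 e (rcons s v) = if newb e s v then S2 e s else rcons (S2 e s) v.
Proof.
rewrite !(S2_nat e v) size_rcons -addn1 iotaD filter_cat map_cat /= add0n.
rewrite nth_rcons ltnn eqxx -[rcons s v]cats1 takel_cat // take_size.
have -> : [seq nth v (s ++ [:: v]) i | i <- iota 0 (size s)
            & ~~ newb e (take i (s ++ [:: v])) (nth v (s ++ [:: v]) i)]
        = [seq nth v s i | i <- iota 0 (size s) & ~~ newb e (take i s) (nth v s i)].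
  rewrite (@eq_in_filter _ _ (fun i => ~~ newb e (take i s) (nth v s i))); last first.
    move=> i; rewrite mem_iota => /andP[_ Hi].
    by rewrite cats1 nth_rcons Hi -cats1 takel_cat // ltnW.
  apply/eq_in_map => i; rewrite mem_filter mem_iota => /andP[_ /andP[_ Hi]].
  by rewrite cats1 nth_rcons Hi.
by case: newb => /=; rewrite ?nth_cat ?ltnn ?subnn /= ?cats1 ?cats0.
Qed.

Lemma S12_size (T : finType) (e : rel T) (s : seq T) :
  size (S1 e s) + size (S2 e s) = size s.
Proof.
elim/last_ind: s => [|s v IH].
  have E : enum 'I_0 = [::] by apply/size0nil; rewrite size_enum_ord.
  by rewrite /S1 /S2 /= E.
rewrite S1_rcons S2_rcons size_rcons -IH.
by case: newb; rewrite size_rcons ?addnS ?addSn.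
Qed.

Lemma S1_nil (T : finType) (e : rel T) : S1 e [::] = [::].
Proof. have E : enum 'I_0 = [::] by apply/size0nil; rewrite size_enum_ord.
  by rewrite /S1 /= E. Qed.
Lemma S2_nil (T : finType) (e : rel T) : S2 e [::] = [::].
Proof. have E : enum 'I_0 = [::] by apply/size0nil; rewrite size_enum_ord.
  by rewrite /S2 /= E. Qed.

Lemma S1_sub (T : finType) (e : rel T) (s : seq T) : subseq (S1 e s) s.
Proof.
elim/last_ind: s => [|s v IH]; first by rewrite S1_nil.
rewrite S1_rcons; case: newb.
  by rewrite -!cats1 cat_subseq.
exact: subseq_trans IH (subseq_rcons _ _).
Qed.

Lemma S2_sub (T : finType) (e : rel T) (s : seq T) : subseq (S2 e s) s.
Proof.
elim/last_ind: s => [|s v IH]; first by rewrite S2_nil.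
rewrite S2_rcons; case: newb.
  exact: subseq_trans IH (subseq_rcons _ _).
by rewrite -!cats1 cat_subseq.
Qed.

Lemma okb_perm (T : finType) (e : rel T) (p q : seq T) (v : T) :
  perm_eq p q -> okb e p v = okb e q v.
Proof.
move/permP=> H; rewrite /okb; apply: eq_existsb => w.
by rewrite H.
Qed.

Lemma newb_perm (T : finType) (e : rel T) (p q : seq T) (v : T) :
  perm_eq p q -> newb e p v = newb e q v.
Proof. by move=> H; rewrite /newb (perm_big _ H). Qed.

Lemma in_bigcup_count (T : finType) (e : rel T) (p : seq T) (w : T) :
  (w \in \bigcup_(u <- p) cnbh e u) = (0 < count (fun u => w \in cnbh e u) p).
Proof.
elim: p => [|u p IH]; first by rewrite big_nil in_set0.
by rewrite big_cons in_setU IH /=; case: (w \in cnbh e u).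
Qed.

Lemma dns_uniq (T : finType) (e : rel T) (s : seq T) : is_dns e s -> uniq s.
Proof. by case/andP. Qed.

Lemma dns_del (T : finType) (e : rel T) (p1 p2 : seq T) (x : T) :
  is_dns e (p1 ++ x :: p2) -> is_dns e (p1 ++ p2).
Proof.
elim/last_ind: p2 => [|p2 y IH].
  by rewrite cats1 dns_rcons cats0 => /andP[].
rewrite -rcons_cons -!rcons_cat !dns_rcons => /and3P[H1 H2 H3].
apply/and3P; split; first exact: IH.
  by move: H2; rewrite !mem_cat in_cons; apply: contra => /orP[->|->] //; rewrite !orbT.
move/existsP: H3 => [w /andP[Hw Hc]]; apply/existsP; exists w; rewrite Hw /=.
by apply: leq_trans Hc; rewrite !count_cat /= leq_add2l leq_addl.
Qed.

Lemma arith4 (x y z k : nat) : x + (z + y) + (k + 0) = x + y + (k + 0) + (z + 0).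
Proof. lia. Qed.

Lemma reorder (T : finType) (e : rel T) (n : nat) (s : seq T) :
  size s <= n -> is_dns e s ->
  exists t, [/\ is_dns e t, perm_eq s t & size (S2 e t) <= size (S1 e t)].
Proof.
elim: n s => [|n IHn] s.
  rewrite leqn0 => /nilP -> H; exists [::]; split => //.
  by rewrite S2_nil.
case/lastP: s => [|p v].
  by move=> _ H; exists [::]; split => //; rewrite S2_nil.
rewrite size_rcons ltnS dns_rcons => Hsz /and3P[Hp Hv Hok].
case Hnew: (newb e p v).
  have [t [Ht Hpt Hsz2]] := IHn p Hsz Hp.
  exists (rcons t v); split.
  - rewrite dns_rcons Ht -(perm_mem Hpt) Hv /= -(okb_perm _ _ Hpt) //.
  - by rewrite -!cats1 perm_cat2r.
  - by rewrite S1_rcons S2_rcons -(newb_perm _ _ Hpt) Hnew size_rcons ltnW.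
move/existsP: Hok => [w /andP[Hw Hc]].
have : w \in \bigcup_(u <- p) cnbh e u.
  move/negbFE: Hnew; rewrite setD_eq0 => /subsetP; exact.
rewrite in_bigcup_count -has_count => /hasP [u Hu Hwu].
case/splitPr: Hu Hp Hv Hc Hsz => p1 p2 Hp Hv Hc Hsz.
move: Hc; rewrite count_cat /= Hwu /= => Hc.
have Hc0 : count (fun u => w \in cnbh e u) (p1 ++ p2) = 0.
  by move: Hc; rewrite count_cat addnCA add1n ltnS leqn0 => /eqP.
have HR := dns_del Hp.
have HszR : size (p1 ++ p2) <= n.
  by apply: leq_trans Hsz; rewrite !size_cat /= leq_add2l leqnSn.
have [t [Ht Hpt Hsz2]] := IHn _ HszR HR.
have Hct : count (fun u => w \in cnbh e u) t = 0 by rewrite -(permP Hpt).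
have Hvt : v \notin t.
  by rewrite -(perm_mem Hpt); move: Hv; rewrite !mem_cat in_cons; apply: contra => /orP[->|->] //; rewrite !orbT.
have Hnt : newb e t v.
  apply/set0Pn; exists w; rewrite in_setD Hw andbT in_bigcup_count Hct //.
have Hup : uniq (u :: p1 ++ p2).
  have Hperm : perm_eq (p1 ++ [:: u] ++ p2) ([:: u] ++ p1 ++ p2).
    by rewrite perm_catCA perm_refl.
  by rewrite -(perm_uniq Hperm); exact: dns_uniq Hp.
have Hut : u \notin t.
  by rewrite -(perm_mem Hpt); case/andP: Hup.
have Huv : u != v.
  by apply: contraNneq Hv => <-; rewrite mem_cat in_cons eqxx orbT.
exists (rcons (rcons t v) u); split.
- rewrite dns_rcons dns_rcons Ht Hvt /= mem_rcons in_cons negb_or Huv Hut /=.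
  apply/andP; split.
    by apply/existsP; exists w; rewrite Hw Hct.
  apply/existsP; exists w; rewrite Hwu /= -cats1 count_cat Hct /=.
  by case: (w \in cnbh e v).
- apply/permP => a; move/permP: Hpt => /(_ a) Ha.
  rewrite -!cats1 !count_cat /= -Ha !count_cat /=.
  exact: arith4.
- rewrite !S1_rcons !S2_rcons Hnt.
  case: newb; rewrite !size_rcons.
    by apply: leq_trans Hsz2 (leq_trans (leqnSn _) (leqnSn _)).
  by rewrite ltnS.
Qed.

Lemma cnbh_sym (T : finType) (e : rel T) (w x : T) :
  symmetric e -> (w \in cnbh e x) = (x \in cnbh e w).
Proof. by move=> Hs; rewrite !inE eq_sym Hs. Qed.

Lemma count_card (T : finType) (e : rel T) (s : seq T) (w : T) :
  symmetric e -> uniq s ->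
  count (fun u => w \in cnbh e u) s = #|cnbh e w :&: [set x in s]|.
Proof.
move=> Hs Hu; rewrite -size_filter -(card_uniqP _); last exact: filter_uniq.
apply: eq_card => x; rewrite mem_filter in_setI in_set (cnbh_sym _ _ Hs).
by rewrite andbC.
Qed.

Lemma dns_nil (T : finType) (e : rel T) : is_dns e [::].
Proof. by rewrite /is_dns /=; apply/forallP => -[]. Qed.

Lemma dns_size (T : finType) (e : rel T) (s : seq T) : is_dns e s -> size s <= #|T|.
Proof. by move/dns_uniq/card_uniqP <-; exact: max_card. Qed.

Lemma extend1 (T : finType) (e : rel T) (s : seq T) :
  simple_graph e -> no_isolated e -> is_dns e s -> ~~ is_dds e s ->
  exists x, is_dns e (rcons s x).
Proof.
move=> [Hsym Hirr] Hiso Hs; rewrite /is_dds Hs /= => /forallPn [w Hw].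
have [u Hwu] := Hiso w.
have Hsub : ~~ (cnbh e w \subset [set x in s]).
  apply: contra Hw => Hsub; move/setIidPl: Hsub => ->.
  have -> : 2 = #|[set w; u]|.
    rewrite cards2; case: eqP => // Ewu; move: Hwu; rewrite -Ewu.
    by rewrite Hirr.
  apply: subset_leq_card; apply/subsetP => x; rewrite !inE.
  by case/orP => /eqP ->; rewrite ?eqxx ?Hwu ?orbT.
case/subsetPn: Hsub => x Hx Hxs.
exists x; rewrite dns_rcons Hs /=; rewrite in_set in Hxs; rewrite Hxs /=.
apply/existsP; exists w.
rewrite (cnbh_sym _ _ Hsym) Hx /= (count_card _ Hsym (dns_uniq Hs)).
by rewrite leqNgt.
Qed.

Lemma ext_dds (T : finType) (e : rel T) (n : nat) (s : seq T) :
  simple_graph e -> no_isolated e ->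
  #|T| - size s <= n -> is_dns e s -> exists t, is_dds e t.
Proof.
move=> Hg Hiso.
elim: n s => [|n IHn] s Hn Hs; case Hd: (is_dds e s); try by exists s.
- have [x Hx] := extend1 Hg Hiso Hs (negbT Hd).
  have := dns_size Hx; rewrite size_rcons; move: Hn; lia.
- have [x Hx] := extend1 Hg Hiso Hs (negbT Hd).
  apply: (IHn _ _ Hx); have := dns_size Hx; rewrite size_rcons; move: Hn; lia.
Qed.

Lemma dds_dns (T : finType) (e : rel T) (s : seq T) : is_dds e s -> is_dns e s.
Proof. by rewrite /is_dds => /andP[]. Qed.

Theorem corollary1 (T : finType) (e : rel T) :
  simple_graph e -> no_isolated e ->
  exists S : seq T,
    is_gdds e S /\
    #|[set x in S2 e S]| <= #|[set x in S1 e S]| /\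
    gamma_gr2 e <= 2 * #|[set x in S1 e S]|.
Proof.
move=> Hg Hiso.
have [s0 Hs0] : exists s, is_dds e s.
  apply: (@ext_dds T e #|T| [::] Hg Hiso _ (@dns_nil T e)).
  by rewrite subn0.
pose P := fun n : 'I_#|T|.+1 => [exists t : n.-tuple T, is_dds e t].
have Hg2 : gamma_gr2 e = \max_(i in P) (val i) by [].
have Hs0n : size s0 < #|T|.+1.
  rewrite ltnS; apply: dns_size; by exact: dds_dns Hs0.
have HP : 0 < #|P|.
  apply/card_gt0P; exists (Ordinal Hs0n).
  by apply/existsP; exists (in_tuple s0).
have [i Hi Heq] := eq_bigmax_cond (fun i : 'I_#|T|.+1 => val i) HP.
case/existsP: Hi => t Ht.
have Htmax : forall t', is_dds e t' -> size t' <= size t.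
  move=> t' Ht'; rewrite size_tuple -/(val i) -Heq.
  have Hn : size t' < #|T|.+1.
    rewrite ltnS; apply: dns_size; by exact: dds_dns Ht'.
  apply: (@leq_bigmax_cond _ (fun i => i \in P) (fun i : 'I_#|T|.+1 => val i) (Ordinal Hn)).
  by apply/existsP; exists (in_tuple t').
have Htdns : is_dns e t by exact: dds_dns Ht.
have [t2 [Ht2 Hperm Hsz]] := @reorder T e (size t) t (leqnn _) Htdns.
have Hdds2 : is_dds e t2.
  rewrite /is_dds Ht2 /=; move: Ht; rewrite /is_dds => /andP[_ /forallP Hf].
  apply/forallP => w.
  have -> : [set x in t2] = [set x in (t : seq T)].
    by apply/setP => x; rewrite !inE (perm_mem Hperm).
  exact: Hf.
have Hu2 := dns_uniq Ht2.
have E1 : #|[set x in S1 e t2]| = size (S1 e t2).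
  by rewrite cardsE; apply/card_uniqP; exact: subseq_uniq (S1_sub e t2) Hu2.
have E2 : #|[set x in S2 e t2]| = size (S2 e t2).
  by rewrite cardsE; apply/card_uniqP; exact: subseq_uniq (S2_sub e t2) Hu2.
exists t2; split; [split => // t' Ht' | split].
- by rewrite -(perm_size Hperm); exact: Htmax.
- by rewrite E1 E2.
- rewrite E1 Hg2 Heq.
  have -> : val i = size t2 by rewrite -(perm_size Hperm) size_tuple.
  by rewrite -(S12_size e t2) mul2n -addnn leq_add2l.
Qed.
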